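(* Let $G$ be a connected (claw, bull)-free graph and let $C$ be an induced cycle of $G$ of length at least $4$. Then $N[C]=V(G)$, i.e. every vertex of $G$ lies on $C$ or is adjacent to a vertex of $C$.
   Context: A claw is a graph isomorphic to $K_{1,3}$; a bull is the graph obtained from a triangle by adding two pendant edges at two different vertices. A graph is (claw, bull)-free if it has no induced claw and no induced bull. $N[C]$ denotes $V(C)\cup N(V(C))$, where $N(X)=\big(\bigcup_{x\in X}N(x)\big)\setminus X$. *)

(* Defs.v *)
From mathcomp Require Import all_boot.
Set Implicit Arguments. Unset Strict Implicit. Unset Printing Implicit Defensive.

Definition simple_graph (T : finType) (adj : rel T) : Prop :=
  symmetric adj /\ irreflexive adj.

Definition connected_graph (T : finType) (adj : rel T) : Prop :=
  forall x y : T, connect adj x y.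

Definition has_induced_claw (T : finType) (adj : rel T) : Prop :=
  exists a b c d : T, uniq [:: a; b; c; d] /\
    adj a b /\ adj a c /\ adj a d /\
    ~~ adj b c /\ ~~ adj b d /\ ~~ adj c d.

Definition has_induced_bull (T : finType) (adj : rel T) : Prop :=
  exists x y z u v : T, uniq [:: x; y; z; u; v] /\
    adj x y /\ adj y z /\ adj x z /\ adj u x /\ adj v y /\
    ~~ adj u y /\ ~~ adj u z /\ ~~ adj u v /\ ~~ adj v x /\ ~~ adj v z.

Definition claw_bull_free (T : finType) (adj : rel T) : Prop :=
  ~ has_induced_claw adj /\ ~ has_induced_bull adj.

Definition induced_cycle (T : finType) (adj : rel T) (k : nat) (c : 'I_k -> T) : Prop :=
  injective c /\
  forall i j : 'I_k,
    adj (c i) (c j) = ((val j == (val i).+1 %% k) || (val i == (val j).+1 %% k)).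

Definition closed_nbhd (T : finType) (adj : rel T) (k : nat) (c : 'I_k -> T) : {set T} :=
  [set v | [exists i, (v == c i) || adj v (c i)]].

(* Main.v *)
Require Import Defs.
From mathcomp Require Import all_boot zify.
Lemma mod2 k x : x < k + k -> x %% k = if x < k then x else x - k.
Proof.
case: ifP => h hx; first by rewrite modn_small.
have -> : x = (x - k) + k by lia.
rewrite modnDr modn_small; lia.
Qed.
Lemma idx k i : 4 <= k -> i < k -> let a := i.+1 %% k in let b := (i + k.-1) %% k in
 [/\ b.+1 %% k = i, a != b.+1 %% k, b != a.+1 %% k & b != a].
Proof. move=> hk hi a b.
have ha : a = if i.+1 < k then i.+1 else i.+1 - k by rewrite /a mod2 //; lia.
have hb : b = if i + k.-1 < k then i + k.-1 else i + k.-1 - k by rewrite /b mod2 //; lia.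
have hb1 : b.+1 %% k = if b.+1 < k then b.+1 else b.+1 - k by rewrite mod2 //; lia.
have ha1 : a.+1 %% k = if a.+1 < k then a.+1 else a.+1 - k by rewrite mod2 //; lia.
rewrite hb1 ha1; move: ha hb; clearbody a b; split; try apply/eqP; move: ha hb;
 repeat case: ifP => ?; lia.
Qed.

Lemma exit_path (T : finType) (e : rel T) (A : {set T}) x p :
  path e x p -> last x p \in A -> x \notin A ->
  exists u v, [/\ e v u, v \notin A & u \in A].
Proof.
elim: p x => [|y p IH] x /=; first by move=> _ ->.
move=> /andP[exy py] hl hx; case: (boolP (y \in A)) => hy; first by exists y, x.
exact: (IH y py hl hy).
Qed.

Ltac cl1 huc neq Hsym := first [ done | by apply/negbT | exact: huc | exact: neq | by rewrite Hsym ].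
Ltac cl huc neq Hsym := first [ cl1 huc neq Hsym | rewrite eq_sym; cl1 huc neq Hsym | rewrite Hsym; cl1 huc neq Hsym ].
Ltac fin huc neq Hsym := split; [rewrite /= !inE !negb_or; repeat (apply/andP; split); cl huc neq Hsym | repeat split; cl huc neq Hsym].

Theorem lemma3 (T : finType) (adj : rel T) (k : nat) (c : 'I_k -> T) :
  simple_graph adj -> connected_graph adj -> claw_bull_free adj ->
  4 <= k -> induced_cycle adj c ->
  closed_nbhd adj c = [set: T].
Proof.
move=> [Hsym Hirr] Hconn [Hclaw Hbull] Hk [Hinj Hadj].
apply/setP => w; rewrite in_setT; apply/negPn/negP => Hw.
have k0 : 0 < k by lia.
pose i0 : 'I_k := Ordinal k0.
have c0N : c i0 \in closed_nbhd adj c by rewrite inE; apply/existsP; exists i0; rewrite eqxx.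
case/connectP: (Hconn w (c i0)) => p Hp Hl.
have hl : last w p \in closed_nbhd adj c by rewrite -Hl.
have [u [v [avu vN uN]]] := @exit_path _ _ _ _ _ Hp hl Hw.
have hv : forall j, ~~ adj v (c j) /\ v != c j.
  move=> j; move: vN; rewrite inE negb_exists => /forallP /(_ j).
  by rewrite negb_or => /andP[].
have neq : forall x y, adj x y -> x != y.
  by move=> x y axy; apply/eqP => exy; move: axy; rewrite exy Hirr.
have huc : forall j, u != c j.
  move=> j; apply/eqP => euc; have [] := hv j; by rewrite -euc avu.
move: uN; rewrite inE => /existsP [i /orP [/eqP euc | aui]].
  by move: (huc i); rewrite euc eqxx.
have [e1 e2 e3 e4] := @idx _ _ Hk (ltn_ord i).
pose ip : 'I_k := Ordinal (ltn_pmod i.+1 k0).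
pose im : 'I_k := Ordinal (ltn_pmod (i + k.-1) k0).
have a_i_ip : adj (c i) (c ip) by rewrite Hadj /= eqxx.
have a_im_i : adj (c im) (c i) by rewrite Hadj /= e1 eqxx.
have n_im_ip : ~~ adj (c im) (c ip) by rewrite Hadj /= negb_or e2 e3.
have d_im_ip : c im != c ip by rewrite (inj_eq Hinj) -val_eqE /= e4.
have [nvi dvi] := hv i.
have [nvip dvip] := hv ip.
have [nvim dvim] := hv im.
have duv : u != v by rewrite eq_sym; apply: neq.
case Hp1: (adj u (c ip)); case Hm1: (adj u (c im)).
- apply: Hclaw; exists u, (c im), (c ip), v; fin huc neq Hsym.
- apply: Hbull; exists (c i), u, (c ip), (c im), v; fin huc neq Hsym.
- apply: Hbull; exists (c i), u, (c im), (c ip), v; fin huc neq Hsym.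
- apply: Hclaw; exists (c i), (c im), (c ip), u; fin huc neq Hsym.
Qed.
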